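(* Let $\kappa,\gamma\in\mathbb{N}^n$ and let $T:\mathbb{C}_\kappa[z_1,\ldots,z_n]\to\mathbb{C}_\gamma[z_1,\ldots,z_n]$ be a linear operator. Then the symbol of the polarization of $T$ is the polarization of the symbol of $T$, that is, $G_{\Pi(T)}=\Pi^\uparrow_{\gamma\oplus\kappa}(G_T)$.
   Context: $\mathbb{C}_\kappa[z_1,\ldots,z_n]$: polynomials of degree at most $\kappa_i$ in $z_i$. $\mathbb{C}_{MA}^\kappa$: multi-affine polynomials in variables $z_{ij}$, $1\le i\le n$, $1\le j\le\kappa_i$. Polarization $\Pi_\kappa^\uparrow:\mathbb{C}_\kappa[z]\to\mathbb{C}_{MA}^\kappa$ is linear with $\Pi_\kappa^\uparrow(z^\alpha)=\binom{\kappa}{\alpha}^{-1}\prod_{i}E_{\alpha_i}(z_{i1},\ldots,z_{i\kappa_i})$ ($E_k$ the $k$-th elementary symmetric polynomial, $\binom{\kappa}{\alpha}=\prod\binom{\kappa_i}{\alpha_i}$); the projection $\Pi_\kappa^\downarrow:\mathbb{C}_{MA}^\kappa\to\mathbb{C}_\kappa[z]$ substitutes $z_{ij}\mapsto z_i$. The polarization of $T$ is $\Pi(T)=\Pi_\gamma^\uparrow\circ T\circ\Pi_\kappa^\downarrow:\mathbb{C}_{MA}^\kappa\to\mathbb{C}_{MA}^\gamma$. The symbol of $T$ is $G_T(z,w)=T[(z+w)^\kappa]=\sum_{\alpha\le\kappa}\binom{\kappa}{\alpha}T(z^\alpha)w^{\kappa-\alpha}\in\mathbb{C}_{\gamma\oplus\kappa}[z_1,\ldots,z_n,w_1,\ldots,w_n]$,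 with $\gamma\oplus\kappa=(\gamma_1,\ldots,\gamma_n,\kappa_1,\ldots,\kappa_n)$; the symbol of the operator $\Pi(T)$ on multi-affine polynomials is $G_{\Pi(T)}=\Pi(T)\big[\prod_{i=1}^n\prod_{j=1}^{\kappa_i}(z_{ij}+w_{ij})\big]$ ($\Pi(T)$ acting on the $z_{ij}$ variables). $\Pi^\uparrow_{\gamma\oplus\kappa}$ polarizes each $z_i$ into $z_{i1},\ldots,z_{i\gamma_i}$ and each $w_i$ into $w_{i1},\ldots,w_{i\kappa_i}$. *)

(* Defs.v *)
From mathcomp Require Import all_boot all_algebra.
From mathcomp Require Import Rstruct.
From mathcomp Require Import complex.
From mathcomp Require Export mpoly.

Set Implicit Arguments.
Unset Strict Implicit.
Unset Printing Implicit Defensive.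
Import GRing.Theory.
Local Open Scope ring_scope.

Definition C : fieldType := complex Rdefinitions.R.

Notation mpolyV F V := {mpoly F[#|V|]}.

Definition sumV (U W : finType) : finType := (U + W)%type.

Section Polarization.
Variable F : fieldType.

Definition var (V : finType) (v : V) : mpolyV F V := 'X_(enum_rank v).

Definition expo (V : finType) (m : 'X_{1..#|V|}) (v : V) : nat := m (enum_rank v).

Definition deg_bounded (V : finType) (k : V -> nat) (p : mpolyV F V) : Prop :=
  forall m, m \in msupp p -> forall v, (expo m v <= k v)%N.

Definition rename (U V : finType) (f : U -> V) (p : mpolyV F U) : mpolyV F V :=
  p \mPo [tuple var (f (enum_val i)) | i < #|U|].

(* the polarized variables z_(i j), 1 <= j <= k i  (j is 0-based here) *)
Definition polvar (I : finType) (k : I -> nat) : finType := {i : I & 'I_(k i)}.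

Definition Epol (I : finType) (k : I -> nat) (i : I) (e : nat) : mpolyV F (polvar k) :=
  \sum_(S : {set 'I_(k i)} | #|S| == e) \prod_(j in S) var (existT (fun i => 'I_(k i)) i j).

Definition binomv (I : finType) (k a : I -> nat) : nat := \prod_(i : I) 'C(k i, a i).

Definition polup (I : finType) (k : I -> nat) (p : mpolyV F I) : mpolyV F (polvar k) :=
  \sum_(m <- msupp p)
     p@_m *: (((binomv k (expo m))%:R)^-1 *: \prod_(i : I) Epol k i (expo m i)).

Definition poldown (I : finType) (k : I -> nat) (q : mpolyV F (polvar k)) : mpolyV F I :=
  rename (fun v : polvar k => projT1 v) q.

Definition polT (I : finType) (k g : I -> nat) (T : mpolyV F I -> mpolyV F I)
  (q : mpolyV F (polvar k)) : mpolyV F (polvar g) :=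
  polup g (T (@poldown I k q)).

(* L acting on the z-variables of a polynomial P in variables z (indexed by U)
   and w (indexed by W), coefficient-wise (linearly) in the w-variables. *)
Definition actz (U U' W : finType) (L : mpolyV F U -> mpolyV F U')
  (P : mpolyV F (sumV U W)) : mpolyV F (sumV U' W) :=
  \sum_(m <- msupp P)
     P@_m *: (rename (@inl U' W) (L (\prod_(u : U) var u ^+ expo m (inl u)))
              * \prod_(w : W) var (@inr U' W w) ^+ expo m (inr w)).

(* symbol of T : F_k[z] -> F_g[z]:  G_T(z,w) = T[(z+w)^k]  (z = inl, w = inr) *)
Definition symbol (I : finType) (k : I -> nat) (T : mpolyV F I -> mpolyV F I)
  : mpolyV F (sumV I I) :=
  actz T (\prod_(i : I) (var (@inl I I i) + var (@inr I I i)) ^+ k i).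

Definition symbolMA (U U' : finType) (L : mpolyV F U -> mpolyV F U')
  : mpolyV F (sumV U' U) :=
  actz L (\prod_(u : U) (var (@inl U U u) + var (@inr U U u))).

End Polarization.

Definition oplus (I : finType) (g k : I -> nat) (s : (sumV I I)) : nat :=
  match s with inl i => g i | inr i => k i end.

(* canonical identification of the variables z_(i j) (j < g i), w_(i j) (j < k i)
   with the polarized variables of the (z,w)-space for the degree vector g (+) k *)
Definition ident (I : finType) (g k : I -> nat)
  (s : sumV (polvar g) (polvar k)) : polvar (oplus g k) :=
  match s with
  | inl (existT i j) => existT (fun s => 'I_(oplus g k s)) (inl i) j
  | inr (existT i j) => existT (fun s => 'I_(oplus g k s)) (inr i) j
  end.

(* Main.v *)
Require Import Defs.
From mathcomp Require Import all_boot all_algebra.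
From mathcomp Require Import mpoly.
Set Implicit Arguments. Unset Strict Implicit. Unset Printing Implicit Defensive.
Import GRing.Theory.
Local Open Scope ring_scope.

Section Lin.
Context (F : fieldType) (N : nat) (M : lmodType F) (f : 'X_{1..N} -> M).

Definition lin (p : {mpoly F[N]}) : M := \sum_(m <- msupp p) p@_m *: f m.

Lemma linS p (s : seq 'X_{1..N}) : uniq s -> {subset msupp p <= s} ->
  lin p = \sum_(m <- s) p@_m *: f m.
Proof.
move=> us sub; rewrite (bigID (fun m => m \in msupp p)) /=.
rewrite [X in _ + X]big1 ?addr0; last by move=> m /memN_msupp_eq0 ->; rewrite scale0r.
rewrite -big_filter /lin; apply: perm_big; apply: uniq_perm.
- exact: msupp_uniq.
- exact: filter_uniq.
by move=> m; rewrite mem_filter; apply/idP/andP => [h|[]//]; split=> //; apply: sub.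
Qed.

Lemma linD p q : lin (p + q) = lin p + lin q.
Proof.
set s := undup (msupp p ++ msupp q ++ msupp (p + q)).
have us : uniq s by apply: undup_uniq.
rewrite !(@linS _ s) //; last 3 first.
- by move=> m h; rewrite mem_undup !mem_cat h ?orbT.
- by move=> m h; rewrite mem_undup !mem_cat h ?orbT.
- by move=> m h; rewrite mem_undup !mem_cat h ?orbT.
by rewrite -big_split /=; apply: eq_bigr => m _; rewrite mcoeffD scalerDl.
Qed.

Lemma linZ c p : lin (c *: p) = c *: lin p.
Proof.
set s := undup (msupp p ++ msupp (c *: p)).
have us : uniq s by apply: undup_uniq.
rewrite !(@linS _ s) //; last 2 first.
- by move=> m h; rewrite mem_undup !mem_cat h ?orbT.
- by move=> m h; rewrite mem_undup !mem_cat h ?orbT.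
by rewrite scaler_sumr; apply: eq_bigr => m _; rewrite mcoeffZ scalerA.
Qed.

Lemma lin0 : lin 0 = 0.
Proof. by rewrite /lin msupp0 big_nil. Qed.

Lemma linX m : lin 'X_[m] = f m.
Proof. by rewrite /lin msuppX big_seq1 mcoeffX eqxx scale1r. Qed.

Lemma lin_sum (I : Type) (r : seq I) (P : pred I) (g : I -> {mpoly F[N]}) :
  lin (\sum_(i <- r | P i) g i) = \sum_(i <- r | P i) lin (g i).
Proof. exact: (big_morph lin linD lin0). Qed.

End Lin.

Section Mono.
Context (F : fieldType) (V : finType).

Definition mk (g : V -> nat) : 'X_{1..#|V|} := [multinom g (enum_val i) | i < #|V|].

Lemma expo_mk g v : expo (mk g) v = g v.
Proof. by rewrite /expo /mk mnmE enum_rankK. Qed.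

Lemma mono_prod (m : 'X_{1..#|V|}) :
  'X_[m] = \prod_(v : V) (@var F V v) ^+ expo m v :> mpolyV F V.
Proof.
rewrite mpolyXE_id (reindex (@enum_rank V)) /=; last first.
  by exists enum_val => x _; rewrite ?enum_rankK ?enum_valK.
by [].
Qed.

Lemma prod_mk (g : V -> nat) :
  \prod_(v : V) (@var F V v) ^+ g v = 'X_[mk g] :> mpolyV F V.
Proof. by rewrite mono_prod; apply: eq_bigr => v _; rewrite expo_mk. Qed.

End Mono.

Section Rename.
Context (F : fieldType).

Lemma rename_var (U V : finType) (h : U -> V) (u : U) :
  rename h (@var F U u) = var F (h u).
Proof. by rewrite /rename /var comp_mpolyXU -tnth_nth tnth_mktuple enum_rankK. Qed.

Lemma renameD (U V : finType) (h : U -> V) p q :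
  rename h (p + q) = rename h p + rename h q :> mpolyV F V.
Proof. by rewrite /rename raddfD. Qed.

Lemma renameZ (U V : finType) (h : U -> V) c p :
  rename h (c *: p) = c *: rename h p :> mpolyV F V.
Proof. by rewrite /rename comp_mpolyZ. Qed.

Lemma renameM (U V : finType) (h : U -> V) p q :
  rename h (p * q) = rename h p * rename h q :> mpolyV F V.
Proof. by rewrite /rename rmorphM. Qed.

Lemma rename_sum (U V : finType) (h : U -> V) (I : Type) (r : seq I) (P : pred I) g :
  rename h (\sum_(i <- r | P i) g i) = \sum_(i <- r | P i) rename h (g i) :> mpolyV F V.
Proof. by rewrite /rename raddf_sum. Qed.

Lemma rename_prod (U V : finType) (h : U -> V) (I : Type) (r : seq I) (P : pred I) g :
  rename h (\prod_(i <- r | P i) g i) = \prod_(i <- r | P i) rename h (g i) :> mpolyV F V.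
Proof. by rewrite /rename rmorph_prod. Qed.

Lemma renameX (U V : finType) (h : U -> V) p e :
  rename h (p ^+ e) = rename h p ^+ e :> mpolyV F V.
Proof. by rewrite /rename rmorphXn. Qed.

End Rename.
Definition blk (I : finType) (k : I -> nat) (S : {set polvar k}) (i : I) : {set 'I_(k i)} :=
  [set j | (existT (fun i => 'I_(k i)) i j) \in S].

Definition unblk (I : finType) (k : I -> nat) (t : fprod (fun i => ({set 'I_(k i)} : finType))) : {set polvar k} :=
  [set u | projT2 u \in t (projT1 u)].

Lemma DL (R : comNzRingType) (I : finType) (k : I -> nat)
  (F : forall i, {set 'I_(k i)} -> R) :
  \sum_(S : {set polvar k}) \prod_i F i (blk S i) =
  \prod_i \sum_(A : {set 'I_(k i)}) F i A.
Proof.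
pose T_ := fun i => ({set 'I_(k i)} : finType).
pose P_ := fun i => [ffun A : T_ i => F i A].
transitivity (\prod_i \sum_(A : T_ i) P_ i A); last first.
  by apply: eq_bigr => i _; apply: eq_bigr => A _; rewrite ffunE.
under [RHS]eq_bigr => i _ do rewrite (big_tag (fun i (A : T_ i) => P_ i A)).
rewrite bigA_distr_big_dep -big_fprod.
rewrite (reindex (fun S : {set polvar k} => fprod_of_fun (fun i => blk S i : T_ i))).
  apply: eq_bigr => S _; apply: eq_bigr => i _; by rewrite fprodE ffunE.
apply: onW_bij; exists (@unblk I k).
  move=> S; apply/setP => -[i j]; by rewrite inE fprodE inE.
move=> t; apply/fprodP => i; rewrite fprodE; apply/setP => j; by rewrite !inE.
Qed.

Lemma untagT (I : eqType) (T_ : I -> Type) (R : Type) (idx : R) (i : I) (F : T_ i -> R) (j : T_ i) :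
  untag idx F (existT T_ i j) = F j.
Proof. exact: (@untagE _ _ _ idx i F (existT T_ i j) (erefl i)). Qed.

Lemma SG (R : comNzRingType) (I : finType) (k : I -> nat) (S : {set polvar k})
  (G : polvar k -> R) :
  \prod_(u in S) G u = \prod_i \prod_(j in blk S i) G (existT _ i j).
Proof.
rewrite (partition_big (fun u : polvar k => projT1 u) predT) //=.
apply: eq_bigr => i _.
pose Q_ := fun i => [pred j | j \in blk S i].
pose P_ := fun i (j : 'I_(k i)) => G (existT _ i j).
have := big_tag_cond (R:=R) (op := *%R) Q_ P_ i.
rewrite /Q_ /P_ /= => ->.
apply: eq_big => -[i' j] /=.
  apply/idP/idP.
    case/andP=> Su /eqP e; subst i'.
    by rewrite inE /= eqxx untagT /= inE Su.
  rewrite inE /= => /andP[/eqP e]; subst i'; rewrite untagT /= inE => ->; by rewrite eqxx.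
case/andP=> _ /eqP e; subst i'; by rewrite untagT.
Qed.

Section Actz.
Context (F : fieldType) (U U' W : finType) (L : mpolyV F U -> mpolyV F U').
Hypothesis LD : forall p q, L (p + q) = L p + L q.
Hypothesis LZ : forall c p, L (c *: p) = c *: L p.

Lemma L0 : L 0 = 0.
Proof. by rewrite -(scale0r 0) LZ scale0r. Qed.

Lemma Lsum (J : Type) (r : seq J) (P : pred J) g :
  L (\sum_(j <- r | P j) g j) = \sum_(j <- r | P j) L (g j).
Proof. exact: (big_morph L LD L0). Qed.

Definition fA (m : 'X_{1..#|sumV U W|}) : mpolyV F (sumV U' W) :=
  rename (@inl U' W) (L (\prod_(u : U) var F u ^+ expo m (inl u)))
              * \prod_(w : W) var F (@inr U' W w) ^+ expo m (inr w).

Lemma actzE P : actz L P = lin fA P.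
Proof. by []. Qed.

Lemma actz_mono (p : mpolyV F U) (e : W -> nat) :
  actz L (rename (@inl U W) p * \prod_(w : W) var F (@inr U W w) ^+ e w)
  = rename (@inl U' W) (L p) * \prod_(w : W) var F (@inr U' W w) ^+ e w.
Proof.
rewrite actzE [p]mpolyE rename_sum mulr_suml lin_sum Lsum rename_sum mulr_suml.
apply: eq_bigr => m _.
rewrite renameZ -scalerAl linZ LZ renameZ -scalerAl; congr (_ *: _).
pose h := fun s : sumV U W => match s with inl u => expo m u | inr w => e w end.
have -> : rename (@inl U W) 'X_[m] * \prod_(w : W) var F (@inr U W w) ^+ e w = 'X_[mk h].
  rewrite -prod_mk /sumV big_sumType /= mono_prod rename_prod; congr (_ * _).
  by apply: eq_bigr => u _; rewrite renameX rename_var.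
rewrite linX /fA; congr (_ * _).
  congr (rename _ (L _)); rewrite mono_prod; apply: eq_bigr => u _; by rewrite expo_mk.
by apply: eq_bigr => w _; rewrite expo_mk.
Qed.

End Actz.

Definition fP (F : fieldType) (J : finType) (k' : J -> nat) (m : 'X_{1..#|J|}) : mpolyV F (polvar k') :=
  ((binomv k' (expo m))%:R^-1 *: \prod_(i : J) Epol F k' i (expo m i)).

Lemma polupE (F : fieldType) (J : finType) (k' : J -> nat) p : polup k' p = lin (@fP F J k') p.
Proof. by []. Qed.

Section Polup.
Context (F : fieldType) (I : finType) (g k : I -> nat).

Lemma Epol_ren i e :
  rename (@ident I g k) (rename (@inl (polvar g) (polvar k)) (Epol F g i e))
  = Epol F (oplus g k) (inl i) e.
rewrite /Epol (@rename_sum _ _ _ (@inl (polvar g) (polvar k))) (@rename_sum _ _ _ (@ident I g k)).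
apply: eq_bigr => A _.
rewrite (@rename_prod _ _ _ (@inl (polvar g) (polvar k))) (@rename_prod _ _ _ (@ident I g k)); apply: eq_bigr => j _; by rewrite !rename_var.
Qed.

Lemma polup_mono (q : mpolyV F I) (e : I -> nat) :
  polup (oplus g k) (rename (@inl I I) q * \prod_(i : I) var F (@inr I I i) ^+ e i)
  = (binomv k e)%:R^-1 *: (rename (@ident I g k) (rename (@inl (polvar g) (polvar k)) (polup g q))
        * \prod_(i : I) Epol F (oplus g k) (inr i) (e i)).
Proof.
rewrite (polupE (oplus g k)) [q]mpolyE rename_sum mulr_suml lin_sum (polupE g) lin_sum.
rewrite (@rename_sum _ _ _ (@inl (polvar g) (polvar k))) (@rename_sum _ _ _ (@ident I g k)) mulr_suml scaler_sumr.
apply: eq_bigr => m _.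
rewrite renameZ -scalerAl linZ (linZ (fP F g)) (@renameZ _ _ _ (@inl (polvar g) (polvar k))) (@renameZ _ _ _ (@ident I g k)) -(scalerAl (q@_m)) scalerA (mulrC _ (q@_m)) -scalerA; congr (_ *: _).
pose h := fun s : sumV I I => match s with inl u => expo m u | inr w => e w end.
have -> : rename (@inl I I) 'X_[m] * \prod_(i : I) var F (@inr I I i) ^+ e i = 'X_[mk h].
  rewrite -prod_mk /sumV big_sumType /= mono_prod rename_prod; congr (_ * _).
  by apply: eq_bigr => u _; rewrite renameX rename_var.
rewrite !linX /fP (@renameZ _ _ _ (@inl (polvar g) (polvar k))) (@renameZ _ _ _ (@ident I g k)) -scalerAl scalerA.
rewrite /binomv /sumV big_sumType /= natrM invfM mulrC; congr ((_ * _) *: _).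
- by congr (_ %:R^-1); apply: eq_bigr => i _; rewrite expo_mk.
- by congr (_ %:R^-1); apply: eq_bigr => i _; rewrite expo_mk.
rewrite big_sumType /= (@rename_prod _ _ _ (@inl (polvar g) (polvar k))) (@rename_prod _ _ _ (@ident I g k)); congr (_ * _).
  by apply: eq_bigr => i _; rewrite expo_mk Epol_ren.
by apply: eq_bigr => i _; rewrite expo_mk.
Qed.

End Polup.

Definition alp (I : finType) (k : I -> nat) (S : {set polvar k}) (i : I) : nat := #|blk S i|.

Lemma CL (R : comNzRingType) (I : finType) (k : I -> nat) (e : I -> nat) (w : polvar k -> R) :
  \sum_(S | [forall i, alp S i == e i]) \prod_(u in S) w u
  = \prod_i \sum_(A : {set 'I_(k i)} | #|A| == e i) \prod_(j in A) w (existT _ i j).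
Proof.
transitivity (\prod_i \sum_(A : {set 'I_(k i)})
     ((#|A| == e i)%:R * \prod_(j in A) w (existT _ i j))); last first.
  apply: eq_bigr => i _; rewrite [RHS]big_mkcond /=; apply: eq_bigr => A _.
  by case: (_ == _); rewrite ?mul1r ?mul0r.
rewrite -(DL (fun i A => (#|A| == e i)%:R * \prod_(j in A) w (existT _ i j))).
rewrite big_mkcond /=; apply: eq_bigr => S _.
rewrite big_split /= -SG.
case: forallP => [h|h].
  by rewrite [X in _ = X * _]big1 ?mul1r // => i _; rewrite -/(alp S i) h.
have [i hi] : exists i, alp S i != e i.
  by apply/existsP; rewrite -negb_forall; apply/negP => /forallP.
by rewrite (bigD1 i) //= (negbTE hi) mul0r mul0r.
Qed.

Lemma count_alp (F : fieldType) (I : finType) (k : I -> nat) (e : I -> nat) :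
  \sum_(S : {set polvar k} | [forall i, alp S i == e i]) (1 : F) = (binomv k e)%:R.
Proof.
transitivity (\sum_(S : {set polvar k} | [forall i, alp S i == e i]) \prod_(u in S) (fun _ => (1:F)) u).
  by apply: eq_bigr => S _; rewrite big1_eq.
rewrite CL /binomv natr_prod; apply: eq_bigr => i _.
transitivity (\sum_(A in [set A : {set 'I_(k i)} | #|A| == e i]) (1:F)).
  by apply: eq_big => [A|A _]; rewrite ?inE ?big1_eq.
by rewrite sumr_const card_draws card_ord.
Qed.

Lemma expand (R : comNzRingType) (U : finType) (a b : U -> R) :
  \prod_u (a u + b u) = \sum_(S : {set U}) (\prod_(u in S) a u) * \prod_(u in ~: S) b u.
Proof.
rewrite bigA_distr; apply: eq_bigr => S _.
rewrite (bigID (fun u => u \in S)) /=; congr (_ * _).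
  by apply: eq_bigr => u ->.
apply: eq_big => [u|u]; first by rewrite inE.
by move/negbTE => ->.
Qed.

Lemma prod_in_pow (R : comNzRingType) (U : finType) (A : {set U}) (b : U -> R) :
  \prod_(u in A) b u = \prod_u b u ^+ (u \in A).
Proof. by rewrite big_mkcond; apply: eq_bigr => u _; case: (u \in A). Qed.

Section Main.
Context (F : fieldType) (hF : forall N : nat, (N.+1)%:R != 0 :> F).
Context (I : finType) (g k : I -> nat) (T : mpolyV F I -> mpolyV F I).
Hypothesis TD : forall p q, T (p + q) = T p + T q.
Hypothesis TZ : forall c p, T (c *: p) = c *: T p.

Local Notation K := (polvar k).

Lemma alp_le (S : {set K}) i : (alp S i <= k i)%N.
Proof. by rewrite /alp; apply: leq_trans (max_card _) _; rewrite card_ord. Qed.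

Lemma alpC (S : {set K}) i : alp (~: S) i = (k i - alp S i)%N.
Proof.
rewrite /alp; have -> : blk (~: S) i = ~: blk S i by apply/setP => j; rewrite !inE.
have := cardsC (blk S i); rewrite card_ord => H.
by rewrite -{1}(addKn #|blk S i| #|~: blk S i|) H.
Qed.

Lemma zS (S : {set K}) :
  \prod_(u in S) var F (projT1 u) = \prod_i var F i ^+ alp S i.
Proof. by rewrite SG; apply: eq_bigr => i _ /=; rewrite prodr_const. Qed.

Definition Phi (S : {set K}) : mpolyV F (polvar (oplus g k)) :=
  rename (@ident I g k) (rename (@inl (polvar g) (polvar k))
     (polup g (T (\prod_i var F i ^+ alp S i)))).

Lemma polTD p q : @polT F I k g T (p + q) = @polT F I k g T p + @polT F I k g T q.
Proof. by rewrite /polT /poldown renameD TD !polupE linD. Qed.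

Lemma polTZ c p : @polT F I k g T (c *: p) = c *: @polT F I k g T p.
Proof. by rewrite /polT /poldown renameZ TZ !polupE linZ. Qed.

Lemma LHS_eq :
  rename (@ident I g k) (symbolMA (@polT F I k g T))
  = \sum_(S : {set K}) Phi S * \prod_(u in ~: S) var F (@ident I g k (inr u)).
Proof.
rewrite /symbolMA expand actzE lin_sum rename_sum; apply: eq_bigr => S _.
rewrite -actzE.
have -> : \prod_(u in S) var F (@inl K K u) = rename (@inl K K) (\prod_(u in S) var F u).
  by rewrite rename_prod; apply: eq_bigr => u _; rewrite rename_var.
rewrite [\prod_(u in ~: S) var F (@inr K K u)]prod_in_pow actz_mono; last 2 first.
- exact: polTD.
- exact: polTZ.
rewrite renameM rename_prod [X in _ = _ * X]prod_in_pow; congr (_ * _); last first.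
  by apply: eq_bigr => u _; rewrite renameX rename_var.
rewrite /Phi /polT /poldown rename_prod.
by congr (rename _ (rename _ (polup _ (T _)))); rewrite -zS; apply: eq_bigr => u _; rewrite rename_var.
Qed.

Lemma RHS_eq :
  polup (oplus g k) (symbol k T)
  = \sum_(S : {set K}) (binomv k (alp (~: S)))%:R^-1 *:
       (Phi S * \prod_i Epol F (oplus g k) (inr i) (alp (~: S) i)).
Proof.
rewrite /symbol.
have -> : \prod_i (var F (@inl I I i) + var F (@inr I I i)) ^+ k i
   = \prod_(u : K) (var F (@inl I I (projT1 u)) + var F (@inr I I (projT1 u))).
  rewrite (eq_bigl (fun u => u \in [set: K])); last by move=> u; rewrite inE.
  rewrite SG; apply: eq_bigr => i _ /=; rewrite prodr_const; congr (_ ^+ _).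
  have -> : blk [set: K] i = [set: 'I_(k i)] by apply/setP => j; rewrite !inE.
  by rewrite cardsT card_ord.
rewrite expand actzE lin_sum polupE lin_sum; apply: eq_bigr => S _.
rewrite -actzE -polupE.
have -> : \prod_(u in S) var F (@inl I I (projT1 u)) = rename (@inl I I) (\prod_(u in S) var F (projT1 u)).
  by rewrite rename_prod; apply: eq_bigr => u _; rewrite rename_var.
have -> : \prod_(u in ~: S) var F (@inr I I (projT1 u)) = \prod_i var F (@inr I I i) ^+ alp (~: S) i.
  by rewrite SG; apply: eq_bigr => i _ /=; rewrite prodr_const.
rewrite actz_mono // polup_mono /Phi zS.
done.
Qed.

Lemma Epol_inr i e :
  Epol F (oplus g k) (inr i) e
  = \sum_(A : {set 'I_(k i)} | #|A| == e) \prod_(j in A) var F (@ident I g k (inr (existT _ i j))).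
Proof. by []. Qed.

Lemma binomv_pos (S : {set K}) : (0 < binomv k (alp S))%N.
Proof. by apply: prodn_gt0 => i; rewrite bin_gt0 alp_le. Qed.

Lemma main_gen :
  rename (@ident I g k) (symbolMA (@polT F I k g T)) = polup (oplus g k) (symbol k T).
Proof.
rewrite LHS_eq RHS_eq.
pose wv := fun u : K => var F (@ident I g k (inr u)).
under [RHS]eq_bigr => S _.
  rewrite (eq_bigr (fun i => \sum_(A : {set 'I_(k i)} | #|A| == alp (~: S) i)
        \prod_(j in A) wv (existT _ i j))); last by move=> i _; rewrite Epol_inr.
  rewrite -CL mulr_sumr scaler_sumr big_mkcond /=.
  over.
rewrite exchange_big /=.
rewrite (reindex_inj (@setC_inj K)) /=.
apply: eq_bigr => S' _.
rewrite -big_mkcond /= setCK.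
have E (S : {set K}) : [forall i, alp S i == alp (~: S') i] = [forall i, alp S' i == alp (~: S) i].
  apply/forallP/forallP => h i; move: (h i) => /eqP hi; apply/eqP.
    by rewrite alpC hi alpC subKn // alp_le.
  by rewrite alpC hi alpC subKn // alp_le.
transitivity (\sum_(S : {set K} | [forall i, alp S' i == alp (~: S) i])
     ((binomv k (alp S'))%:R^-1 *: (Phi (~: S') * \prod_(u in S') wv u))); last first.
  apply: eq_bigr => S /forallP h.
  have hb : binomv k (alp (~: S)) = binomv k (alp S').
    by apply: eq_bigr => i _; rewrite -(eqP (h i)).
  have hP : Phi S = Phi (~: S').
    rewrite /Phi; congr (rename _ (rename _ (polup _ (T _)))); apply: eq_bigr => i _.
    by rewrite alpC (eqP (h i)) alpC subKn // alp_le.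
  by rewrite hb hP.
rewrite -scaler_suml.
have -> : \sum_(S : {set K} | [forall i, alp S' i == alp (~: S) i]) (binomv k (alp S'))%:R^-1
   = (\sum_(S : {set K} | [forall i, alp S' i == alp (~: S) i]) (1 : F)) * (binomv k (alp S'))%:R^-1.
  by rewrite mulr_suml; apply: eq_bigr => S _; rewrite mul1r.
have -> : \sum_(S : {set K} | [forall i, alp S' i == alp (~: S) i]) (1 : F) = (binomv k (alp S'))%:R.
  rewrite (reindex_inj (@setC_inj K)) /= -(@count_alp F I k (alp S')).
  by apply: eq_bigl => S; rewrite setCK; apply/forallP/forallP => h i; rewrite eq_sym.
rewrite mulfV ?scale1r //.
by rewrite -(prednK (binomv_pos S')) hF.
Qed.


End Main.

From mathcomp Require Import Rstruct complex.
Import Num.Theory.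

Lemma hC : forall N : nat, (N.+1)%:R != 0 :> C.
Proof.
move=> N; rewrite /C.
by rewrite pnatr_eq0.
Qed.

Unset Implicit Arguments.
Set Strict Implicit.

Theorem lemma2p5 (n : nat) (kappa gamma : 'I_n -> nat)
  (T : {linear mpolyV C 'I_n -> mpolyV C 'I_n})
  (hT : forall p, deg_bounded kappa p -> deg_bounded gamma (T p)) :
  @rename C _ _ (@ident 'I_n gamma kappa)
     (@symbolMA C (polvar kappa) (polvar gamma) (@polT C 'I_n kappa gamma T))
  = @polup C _ (oplus gamma kappa) (@symbol C 'I_n kappa T).
Proof.
apply: main_gen.
- exact: hC.
- by move=> p q; rewrite linearD.
- by move=> c p; rewrite linearZ.
Qed.
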